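(* Let $(\xi_i,\mathcal{F}_i)_{i=0,\dots,n}$ be a sequence of real-valued martingale differences (with $\mathbf{E}[\xi_i\mid\mathcal{F}_{i-1}]=0$). Let $p\ge2$ and assume $\mathbf{E}[|\xi_i|^p]<\infty$ for all $i\in[1,n]$. For $y>0$ set $\eta_i=\xi_i\mathbf{1}_{\{\xi_i\le y\}}$. Then for all $\lambda>0$ and $i\in[1,n]$, $$\mathbf{E}[e^{\lambda\eta_i}\mid\mathcal{F}_{i-1}]\le1+\frac12e^p\lambda^2\,\mathbf{E}[\xi_i^2\mid\mathcal{F}_{i-1}]+f(y)\,\mathbf{E}[(\xi_i^+)^p\mid\mathcal{F}_{i-1}],$$ where $f(u)=\dfrac{e^{\lambda u}-1-\lambda u}{u^p}$ for $u>0$.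
   Context: $x^+=\max\{x,0\}$. *)

(* Defs.v *)
From HB Require Import structures.
From mathcomp Require Import all_boot all_order all_algebra.
From mathcomp Require Import all_classical all_reals all_analysis.
Set Implicit Arguments. Unset Strict Implicit. Unset Printing Implicit Defensive.
Import Order.TTheory GRing.Theory Num.Theory.
Local Open Scope classical_set_scope.
Local Open Scope ring_scope.

Section Defs.
Context {d : measure_display} {T : measurableType d} {R : realType}.

Definition sub_sigma (G : set (set T)) : Prop :=
  sigma_algebra setT G /\ G `<=` measurable.

Definition measurable_wrt (G : set (set T)) (f : T -> R) : Prop :=
  forall B : set R, measurable B -> G (f @^-1` B).

Definition is_cond_exp (P : probability T R) (G : set (set T))
  (X Y : T -> R) : Prop :=
  [/\ measurable_wrt G Y,
      P.-integrable setT (EFin \o Y) &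
      forall A, G A -> (\int[P]_(x in A) (Y x)%:E = \int[P]_(x in A) (X x)%:E)%E].

Definition trunc (y : R) (xi : T -> R) : T -> R :=
  fun x => if xi x <= y then xi x else 0.

End Defs.

Definition fdef {R : realType} (lambda p u : R) : R :=
  (expR (lambda * u) - 1 - lambda * u) / u `^ p.

(* Main.v *)
Require Import Defs.
From HB Require Import structures.
From mathcomp Require Import all_boot all_order all_algebra.
From mathcomp Require Import all_classical all_reals all_analysis.
From mathcomp Require Import ring lra measurable_realfun.
Import Order.TTheory GRing.Theory Num.Theory.
Local Open Scope classical_set_scope.
Local Open Scope ring_scope.

Section R.
Context {R : realType}.

Lemma scR (a b : R) : a *: b = a * b. Proof. by []. Qed.

Lemma incr_helper (f df : R -> R) (a b : R) : a <= b ->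
  (forall t, a <= t <= b -> is_derive t 1 f (df t)) ->
  (forall t, a < t < b -> 0 <= df t) -> f a <= f b.
Proof.
move=> ab hd hp.
apply: (@ger0_derive1_le_cc R f a b).
- move=> t; rewrite in_itv/= => /andP[h1 h2].
  by have [] := hd t (introT andP (conj (ltW h1) (ltW h2))).
- move=> t; rewrite in_itv/= => /andP[h1 h2].
  rewrite derive1E; have := hd t (introT andP (conj (ltW h1) (ltW h2))) => H.
  by rewrite derive_val; apply: hp; rewrite h1 h2.
- apply: derivable_within_continuous => t; rewrite in_itv/= => /andP[h1 h2].
  by have [] := hd t (introT andP (conj h1 h2)).
- by rewrite in_itv/= lexx ab.
- by rewrite in_itv/= lexx ab.
- exact: ab.
Qed.

Lemma expA (x : R) : x <= 0 -> expR x <= 1 + x + x ^+ 2 / 2.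
Proof.
move=> x0.
pose f := fun t : R => - (1 + t + t ^+ 2 / 2 - expR t).
suff : f x <= f 0.
  by rewrite /f expR0 lerN2; lra.
apply: (@incr_helper f (fun t => - (1 + t - expR t))).
- done.
- move=> t _.
  have -> : f = - ((cst (1:R)) + (@id R) + (2^-1 : R) \*: ((@id R) ^+ 2) - (@expR R)).
    by apply/funext => u; rewrite /f /= mulrC.
  apply: is_derive_eq.
  rewrite expr1 /= !scR add0r; congr (- (_ - _)); by field.
- move=> t /andP[_ t0]; have := expR_ge1Dx t. lra.
Qed.

Lemma expB (x : R) : 0 <= x -> expR x - 1 - x <= x ^+ 2 / 2 * expR x.
Proof.
move=> x0.
pose f := fun t : R => t ^+ 2 / 2 - 1 + expR (- t) * (1 + t).
have : f 0 <= f x.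
  apply: (@incr_helper f (fun t => t * (1 - expR (- t)))) => //.
  - move=> t _.
    have -> : f = (2^-1 : R) \*: ((@id R) ^+ 2) - cst 1 + ((@expR R) \o (@GRing.opp R)) * (cst 1 + (@id R)).
      by apply/funext => u; rewrite /f /= mulrC.
    apply: is_derive_eq.
    rewrite expr1 /= !scR add0r.
    have -> : (cst 1 + @id R) t = 1 + t by []. 
    by field.
  - move=> t /andP[t0 _].
    apply: mulr_ge0; first exact: ltW.
    by rewrite subr_ge0 expR_le1 oppr_le0 ltW.
rewrite /f oppr0 expR0 /=.
have E := expRxMexpNx_1 x.
have P := expR_gt0 x.
move=> H.
nra.
Qed.

Lemma expC (lam p u y : R) : 0 < lam -> 0 < p -> p <= lam * u -> u <= y ->
  (expR (lam*u) - 1 - lam*u) * u `^ (-p) <= (expR (lam*y) - 1 - lam*y) * y `^ (-p).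
Proof.
move=> l0 p0 pu uy.
have u0 : 0 < u.
  have : 0 < lam * u by apply: lt_le_trans pu.
  by rewrite pmulr_rgt0.
pose f := fun t : R => (expR (lam*t) - 1 - lam*t) * t `^ (-p).
apply: (@incr_helper f (fun t => (lam * expR (lam * t) - lam) * t `^ (-p)
   + (expR (lam*t) - 1 - lam*t) * (-p * t `^ (-p - 1)))) => //.
- move=> t /andP[ut _].
  have t0 : 0 < t by apply: lt_le_trans ut.
  have Hp := is_derive1_powR (-p) t0.
  have -> : f = (((@expR R) \o (lam \*: (@id R))) - cst 1 - lam \*: (@id R)) * ((@powR R) ^~ (-p)).
    by apply/funext => v; rewrite /f /=.
  apply: is_derive_eq.
  rewrite /= !scR.
  have -> : ((@expR R) \o lam \*: (@id R) - cst 1 - lam \*: (@id R)) t = expR (lam*t) - 1 - lam*t.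
    by [].

  ring.
- move=> t /andP[ut _].
  have t0 : 0 < t by apply: lt_trans ut.
  have q0 : 0 <= t `^ (-p - 1) by apply: powR_ge0.
  have -> : t `^ (-p) = t * t `^ (-p - 1).
    rewrite -{2}(powRr1 (ltW t0)) -powRD; first by congr (_ `^ _); ring.
    by rewrite (gt_eqF t0) implybT.
  have xp : p <= lam * t.
    apply: (le_trans pu); rewrite ler_pM2l //; exact: ltW.
  have e1 : 1 <= expR (lam * t).
    rewrite -expR0 ler_expR; apply: mulr_ge0; exact: ltW.
  have h1 : 0 <= (expR (lam * t) - 1) * (lam * t - p).
    by apply: mulr_ge0; rewrite subr_ge0.
  have h2 : 0 <= p * (lam * t) by apply: mulr_ge0; [exact: ltW| apply: mulr_ge0; exact: ltW].
  have h3 := mulr_ge0 q0 (addr_ge0 h1 h2).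
  suff -> : (lam * expR (lam * t) - lam) * (t * t `^ (-p - 1)) +
     (expR (lam * t) - 1 - lam * t) * (- p * t `^ (-p - 1)) =
     t `^ (-p - 1) * ((expR (lam * t) - 1) * (lam * t - p) + p * (lam * t)) by [].
  ring.
Qed.

Lemma pointwise (lam p y u : R) : 0 < lam -> 2 <= p -> 0 < y ->
  expR (lam * (if u <= y then u else 0)) <=
  1 + lam * u + 2^-1 * expR p * lam ^+ 2 * u ^+ 2 + fdef lam p y * (Num.max u 0) `^ p.
Proof.
move=> l0 p2 y0.
have p0 : 0 < p by apply: lt_le_trans p2.
have K0 : 0 <= fdef lam p y.
  rewrite /fdef; apply: divr_ge0; last exact: powR_ge0.
  by have := expR_ge1Dx (lam * y); lra.
have ep : 1 <= expR p by rewrite -expR0 ler_expR ltW.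
have C0 : 0 <= 2^-1 * expR p * lam ^+ 2 * u ^+ 2.
  by apply: mulr_ge0; [apply: mulr_ge0; [apply: mulr_ge0 => //; exact: expR_ge0 | exact: sqr_ge0] | exact: sqr_ge0].
have M0 : 0 <= fdef lam p y * (Num.max u 0) `^ p by apply: mulr_ge0 => //; exact: powR_ge0.
have [uy|uy] := leP u y; last first.
  rewrite mulr0 expR0.
  have : 0 <= lam * u by apply: mulr_ge0; apply: ltW => //; apply: lt_trans uy.
  lra.
have [u0|u0] := leP u 0.
  rewrite powR0 ?gt_eqF // mulr0 addr0.
  have H := @expA (lam*u) (mulr_ge0_le0 (ltW l0) u0).
  have H2 : (lam * u) ^+ 2 / 2 <= 2^-1 * expR p * lam ^+ 2 * u ^+ 2.
    have Z : 0 <= lam ^+ 2 * u ^+ 2 by apply: mulr_ge0; exact: sqr_ge0.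
    have E1 : 0 <= expR p - 1 by rewrite subr_ge0.
    have := mulr_ge0 E1 Z.
    by rewrite exprMn; lra.
  lra.
have [lp|lp] := leP (lam * u) p.
  have H := @expB (lam*u) (mulr_ge0 (ltW l0) (ltW u0)).
  have H2 : (lam * u) ^+ 2 / 2 * expR (lam * u) <= 2^-1 * expR p * lam ^+ 2 * u ^+ 2.
    have Z : 0 <= lam ^+ 2 * u ^+ 2 by apply: mulr_ge0; exact: sqr_ge0.
    have el : expR (lam * u) <= expR p by rewrite ler_expR.
    have E1 : 0 <= expR p - expR (lam*u) by rewrite subr_ge0.
    have := mulr_ge0 E1 Z.
    by rewrite exprMn; lra.
  have := mulr_ge0 K0 (powR_ge0 u p).
  lra.
have H := @expC lam p u y l0 p0 (ltW lp) uy.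
have up : 0 < u `^ p by apply: powR_gt0.
have H2 : expR (lam * u) - 1 - lam * u <= fdef lam p y * u `^ p.
  move: H; rewrite !powRN /fdef => H.
  by rewrite -ler_pdivrMr.
lra.
Qed.
End R.

Section M.
Context {d : measure_display} {T : measurableType d} {R : realType}.

Lemma mwrt_meas (G : set (set T)) (f : T -> R) :
  G `<=` measurable -> measurable_wrt G f -> measurable_fun setT f.
Proof. by move=> GM hf _ B mB; rewrite setTI; apply/GM/hf. Qed.

Lemma mwrt_gmeas (G : set (set T)) (f : T -> R) : sigma_algebra setT G ->
  measurable_wrt G f -> measurable_fun (setT : set (g_sigma_algebraType G)) f.
Proof.
move=> sG hf _ B mB; rewrite setTI measurable_g_measurableTypeE //; exact: hf.
Qed.

Lemma int_ce (P : probability T R) (G : set (set T)) (f g : T -> R) :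
  measurable_fun setT f -> (forall x, 0 <= f x) -> G setT ->
  is_cond_exp P G f g -> P.-integrable setT (EFin \o f).
Proof.
move=> mf f0 GT [_ ig hce]; apply/integrableP; split; first exact/measurable_EFinP.
rewrite (eq_integral (fun x => (f x)%:E)); last first.
  by move=> x _; rewrite /= ger0_norm.
rewrite -hce //.
move/integrableP : ig => [mg ig].
apply: le_lt_trans ig.
apply: le_trans (le_abse_integral _ _ mg) => //.
exact: lee_abs.
Qed.

End M.
Arguments int_ce {d T R P G f g}.

Theorem lemma5p1 (d : measure_display) (T : measurableType d) (R : realType)
  (P : probability T R) (n : nat) (F : nat -> set (set T))
  (xi : nat -> T -> R) (p y lambda : R) :
  (forall i, sub_sigma (F i)) ->
  (forall i j, (i <= j)%N -> F i `<=` F j) ->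
  (forall i, (i <= n)%N -> measurable_wrt (F i) (xi i)) ->
  (forall i, (i <= n)%N -> P.-integrable setT (EFin \o xi i)) ->
  (forall i, (1 <= i <= n)%N -> is_cond_exp P (F i.-1) (xi i) (cst 0)) ->
  2 <= p ->
  (forall i, (1 <= i <= n)%N ->
     (\int[P]_x (`|xi i x| `^ p)%:E < +oo)%E) ->
  0 < y -> 0 < lambda ->
  forall i, (1 <= i <= n)%N ->
  forall g1 g2 g3 : T -> R,
    is_cond_exp P (F i.-1) (fun x => expR (lambda * trunc y (xi i) x)) g1 ->
    is_cond_exp P (F i.-1) (fun x => xi i x ^+ 2) g2 ->
    is_cond_exp P (F i.-1) (fun x => (Num.max (xi i x) 0) `^ p) g3 ->
    {ae P, forall x,
       g1 x <= 1 + 2^-1 * expR p * lambda ^+ 2 * g2 x + fdef lambda p y * g3 x}.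
Proof.
move=> hsub _ hmeas hint hce p2 _ y0 l0 i /andP[i1 iN] g1 g2 g3 c1 c2 c3.
set G := F i.-1.
set X := xi i in hint c1 c2 c3 *.
set C := 2^-1 * expR p * lambda ^+ 2.
set K := fdef lambda p y.
have [sG GM] := hsub i.-1.
have GT : G setT.
  by case: sG => G0 GC _; have := GC _ G0; rewrite setD0.
have mX : measurable_fun setT X.
  by apply: (@mwrt_meas _ _ _ (F i)); [exact: (hsub i).2 | exact: hmeas].
have iX := hint i iN.
have [_ _ c0] := hce i (introT andP (conj i1 iN)).
have mE : measurable_fun setT (fun x => expR (lambda * trunc y X x)).
  apply: measurableT_comp; first exact: measurable_expR.
  apply: measurable_funM; first exact: measurable_cst.
  rewrite /trunc; apply: (measurable_fun_ifT (f := fun x => X x <= y) (g := X) (h := cst 0)) => //.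
  by apply: measurable_fun_ler => //; exact: measurable_cst.
have mQ : measurable_fun setT (fun x => X x ^+ 2) by exact: measurable_funX.
have mPp : measurable_fun setT (fun x => (Num.max (X x) 0) `^ p).
  apply: (measurableT_comp (measurable_powR p)).
  by apply: measurable_maxr => //; exact: measurable_cst.
have iE := int_ce mE (fun x => expR_ge0 _) GT c1.
have iQ := int_ce mQ (fun x => sqr_ge0 _) GT c2.
have iPp := int_ce mPp (fun x => powR_ge0 _ _) GT c3.
case: c1 => mg1 ig1 e1.
case: c2 => mg2 ig2 e2.
case: c3 => mg3 ig3 e3.
have S : forall A, G A -> (\int[P]_(x in A) (g1 x)%:E <=
    \int[P]_(x in A) (1%:E + C%:E * (g2 x)%:E + K%:E * (g3 x)%:E))%E.
  move=> A GA; have mA := GM _ GA.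
  have sub f : P.-integrable setT f -> P.-integrable A f.
    exact: integrableS measurableT mA (subsetT A).
  have i1A : P.-integrable A (fun x => 1%:E) by exact: finite_measure_integrable_cst.
  have iXA : P.-integrable A (fun x => lambda%:E * (X x)%:E)%E by apply: (integrableZl mA); apply: sub.
  have iQA : P.-integrable A (fun x => C%:E * (X x ^+ 2)%:E)%E by apply: (integrableZl mA); apply: sub.
  have iPA : P.-integrable A (fun x => K%:E * ((Num.max (X x) 0) `^ p)%:E)%E by apply: (integrableZl mA); apply: sub.
  have i2A : P.-integrable A (fun x => C%:E * (g2 x)%:E)%E by apply: (integrableZl mA); apply: sub.
  have i3A : P.-integrable A (fun x => K%:E * (g3 x)%:E)%E by apply: (integrableZl mA); apply: sub.
  rewrite e1 //.
  apply: (@le_trans _ _ (\int[P]_(x in A) (1%:E + lambda%:E * (X x)%:E + C%:E * (X x ^+ 2)%:E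
      + K%:E * ((Num.max (X x) 0) `^ p)%:E))%E).
    apply: le_integral => //.
    - exact: sub.
    - by apply: integrableD => //; apply: integrableD => //; apply: integrableD.
    - move=> x _; rewrite -!EFinM -!EFinD lee_fin.
      exact: pointwise.
  rewrite integralD //; last by apply: integrableD => //; apply: integrableD.
  rewrite integralD //; last by apply: integrableD.
  rewrite integralD //.
  rewrite integralD //; last by apply: integrableD.
  rewrite integralD //.
  rewrite !integralZl //; try exact: sub.
  rewrite -e2 // -e3 // -(c0 A GA) /= integral0 mule0 adde0.
  exact: lexx.
have mgT1 := mwrt_gmeas _ _ sG mg1.
have mgT2 := mwrt_gmeas _ _ sG mg2.
have mgT3 := mwrt_gmeas _ _ sG mg3.
pose h := fun x => 1 + C * g2 x + K * g3 x - g1 x.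
have mhT : measurable_fun (setT : set (g_sigma_algebraType G)) h.
  apply: measurable_funB => //; apply: measurable_funD; last first.
    by apply: measurable_funM => //; exact: measurable_cst.
  apply: measurable_funD; first exact: measurable_cst.
  by apply: measurable_funM => //; exact: measurable_cst.
have mh : measurable_fun setT h.
  have m1 := mwrt_meas _ _ GM mg1.
  have m2 := mwrt_meas _ _ GM mg2.
  have m3 := mwrt_meas _ _ GM mg3.
  apply: measurable_funB => //; apply: measurable_funD; last first.
    by apply: measurable_funM => //; exact: measurable_cst.
  apply: measurable_funD; first exact: measurable_cst.
  by apply: measurable_funM => //; exact: measurable_cst.
pose B := [set x | h x < 0].
have GB : G B.
  have E : B = h @^-1` [set` `]-oo, 0[%R].
    by apply/seteqP; split => x /=; rewrite in_itv /=.
  rewrite E.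
  have := mhT measurableT _ (@measurable_itv _ `]-oo, 0[%R).
  by rewrite setTI measurable_g_measurableTypeE.
have mB := GM _ GB.
have SB := S B GB.
have I0 : (\int[P]_(x in B) `|(h x)%:E| = 0)%E.
  apply/eqP; rewrite eq_le integral_ge0 ?andbT //.
  have sub f : P.-integrable setT f -> P.-integrable B f.
    exact: integrableS measurableT mB (subsetT B).
  have i1B : P.-integrable B (fun x => 1%:E) by exact: finite_measure_integrable_cst.
  have i2B : P.-integrable B (fun x => C%:E * (g2 x)%:E)%E by apply: (integrableZl mB); apply: sub.
  have i3B : P.-integrable B (fun x => K%:E * (g3 x)%:E)%E by apply: (integrableZl mB); apply: sub.
  have iSB : P.-integrable B (fun x => 1%:E + C%:E * (g2 x)%:E + K%:E * (g3 x)%:E)%E.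
    by apply: integrableD => //; apply: integrableD.
  have ig1B : P.-integrable B (EFin \o g1) by apply: sub.
  rewrite (eq_integral (fun x => ((EFin \o g1) \- (fun x => 1%:E + C%:E * (g2 x)%:E + K%:E * (g3 x)%:E)) x)%E).
    by rewrite integralB // sube_le0.
  move=> x; rewrite inE /B /= => hx.
  rewrite ltr0_norm // -EFinD; congr (_%:E); rewrite /h; ring.
have mhB : measurable_fun B (fun x => (h x)%:E).
  apply/measurable_EFinP; exact: measurable_funS mh.
have := (ae_eq_integral_abs P mB mhB).1 I0.
apply: filterS => x HB.
have [hx|hx] := ltP (h x) 0.
  by have := HB hx; rewrite /= => -[] h0; rewrite h0 ltxx in hx.
by move: hx; rewrite /h subr_ge0.
Qed.
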